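(* No deterministic online scheduler for the serial-parallel scheduling problem on $p$ processors has awake-time competitive ratio smaller than $\phi-1/p$, where $\phi=(1+\sqrt5)/2$ is the golden ratio: for every such scheduler there is a task arrival process on which its awake time is at least $(\phi-1/p)$ times the optimal offline awake time.
   Context: Serial-parallel scheduling problem: $p$ identical processors. A task arrival process is a finite set of tasks $\tau_i=(\sigma_i,\pi_i,t_i)$ with arrival time $t_i\ge0$, serial work $\sigma_i$ and parallel work $\pi_i$, $1\le\pi_i/\sigma_i\le p$. A task is performed either by its serial job (work $\sigma_i$, at most one processor at any instant) or by its parallel job (work $\pi_i$, any number of processors, rate equal to number of processors); time is continuous, allocations may be fractional via time sharing, preemption is allowed, and the choice of implementation is irrevocable once the task is started (the scheduler may delay starting a task). A task is alive from arrival until completion; awake time is the measure of the set of times at which some task is alive. An online scheduler learns about a task only at its arrival; the optimal offline schedule knows everything in advance. *)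

(* Defs.v *)
From HB Require Import structures.
From mathcomp Require Import all_boot all_order all_algebra.
From mathcomp Require Import all_classical all_reals all_analysis.
Set Implicit Arguments. Unset Strict Implicit. Unset Printing Implicit Defensive.
Import Order.TTheory GRing.Theory Num.Theory.
Local Open Scope classical_set_scope.
Local Open Scope ring_scope.

Section Sched.
Variable R : realType.

(* A task tau = (sigma, pi, t, id): serial work, parallel work, arrival
   time, and an identifier (so that identical tasks can occur several times
   in an arrival process). *)
Definition task := (R * R * R * nat)%type.
Definition sigma (x : task) : R := x.1.1.1.
Definition pwork (x : task) : R := x.1.1.2.
Definition arr (x : task) : R := x.1.2.

Definition valid_task (p : nat) (x : task) : Prop :=
  0 <= arr x /\ 0 < sigma x /\ 1 <= pwork x / sigma x <= p%:R.
Definition valid_instance (p : nat) (s : seq task) : Prop :=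
  uniq s /\ (forall x, x \in s -> valid_task p x).

(* A (fractional, preemptive) schedule: for each task, the chosen
   implementation (true = parallel job, false = serial job), the processing
   rate (number of processors allocated) as a function of time, and its
   completion time. *)
Record schedule := Schedule {
  par : task -> bool;
  rate : task -> R -> R;
  comp : task -> R }.

Definition work (S : schedule) (x : task) : R :=
  if par S x then pwork x else sigma x.

Definition done_by (S : schedule) (x : task) (v : R) : \bar R :=
  (\int[lebesgue_measure]_(u in `[arr x, v]) (rate S x u)%:E)%E.

Definition feasible (p : nat) (s : seq task) (S : schedule) : Prop :=
  (forall u, \sum_(x <- s) rate S x u <= p%:R) /\
  forall x, x \in s ->
    [/\ measurable_fun setT (rate S x),
        (forall u, 0 <= rate S x u),
        (forall u, ~~ par S x -> rate S x u <= 1) &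
        (forall u, u < arr x \/ comp S x < u -> rate S x u = 0)] /\
    [/\ arr x <= comp S x,
        done_by S x (comp S x) = (work S x)%:E &
        (forall v, v < comp S x -> (done_by S x v < (work S x)%:E)%E)].

Definition awake (s : seq task) (S : schedule) : \bar R :=
  lebesgue_measure (\big[setU/set0]_(x <- s) `[arr x, comp S x]%classic).

Definition opt_awake (p : nat) (s : seq task) : \bar R :=
  ereal_inf [set awake s S | S in [set S | feasible p s S]].

Definition arrived (s : seq task) (t : R) : seq task :=
  [seq x <- s | arr x <= t].

(* A deterministic online scheduler: maps every arrival process to a
   schedule, and its behaviour up to time t (allocations, and the
   implementation of every task already started) depends only on the tasks
   arrived by time t. *)
Definition online_scheduler (p : nat) (A : seq task -> schedule) : Prop :=
  (forall s, valid_instance p s -> feasible p s (A s)) /\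
  forall s s' t, valid_instance p s -> valid_instance p s' ->
    arrived s t =i arrived s' t ->
    forall x, x \in arrived s t ->
      (forall u, u <= t -> rate (A s) x u = rate (A s') x u) /\
      ((exists u, u <= t /\ 0 < rate (A s) x u) -> par (A s) x = par (A s') x).

Definition golden : R := (1 + Num.sqrt 5) / 2.

End Sched.

(* Main.v *)
Require Import Defs.
From HB Require Import structures.
From mathcomp Require Import all_boot all_order all_algebra.
From mathcomp Require Import all_classical all_reals all_analysis.
From mathcomp Require Import measurable_realfun ring lra.
Import Order.TTheory GRing.Theory Num.Theory.
Local Open Scope ring_scope.
Set Implicit Arguments. Unset Strict Implicit.
Local Open Scope classical_set_scope.

Lemma int_zero_outside (R : realType) (f : R -> R) (D : set R) :
  (forall u, ~ D u -> f u = 0) ->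
  (\int[lebesgue_measure]_(x in D) (f x)%:E = \int[lebesgue_measure]_x (f x)%:E)%E.
Proof.
move=> Hf; rewrite integral_mkcond; apply: eq_integral => x _.
rewrite patchE; case: ifPn => // /negP; rewrite inE => nD.
by rewrite Hf.
Qed.

Lemma work_le (R : realType) (s : seq (task R)) (S : schedule R) (K d T : R) :
  (forall x, x \in s -> [/\ measurable_fun setT (rate S x),
        (forall u, 0 <= rate S x u),
        (forall u, u < arr x \/ Defs.comp S x < u -> rate S x u = 0) &
        done_by S x (Defs.comp S x) = (work S x)%:E]) ->
  (forall x, x \in s -> forall u, u < d \/ T < u -> rate S x u = 0) ->
  (forall u, \sum_(x <- s) rate S x u <= K) -> d <= T ->
  \sum_(x <- s) work S x <= K * (T - d).
Proof.
move=> Hs HdT HK dT.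
pose g x u : \bar R := if x \in s then (rate S x u)%:E else 0%E.
have E1 : forall x, x \in s -> (work S x)%:E =
   (\int[lebesgue_measure]_(u in `[d, T]) g x u)%E.
  move=> x xs; have [m0 r0 z0 <-] := Hs x xs.
  rewrite /done_by /g xs int_zero_outside; last first.
    move=> u; rewrite /= in_itv /= => /negP; rewrite negb_and -!ltNge.
    by move=> /orP[] h; apply: z0; [left|right].
  rewrite int_zero_outside //.
  move=> u; rewrite /= in_itv /= => /negP; rewrite negb_and -!ltNge.
  by move=> /orP[] h; apply: HdT => //; [left|right].
rewrite -lee_fin -sumEFin.
rewrite (eq_big_seq (fun x => \int[lebesgue_measure]_(u in `[d, T]) g x u)%E); last first.
  by move=> x xs; rewrite E1.
have mg : forall x, measurable_fun `[d, T] (g x).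
  move=> x; rewrite /g; case: (boolP (x \in s)) => xs; last first.
    exact: measurable_cst.
  have [m0 _ _ _] := Hs x xs.
  by apply/measurable_EFinP; exact: measurable_funS m0.
have g0 : forall x u, `[d, T] u -> (0 <= g x u)%E.
  by move=> x u _; rewrite /g; case: ifPn => // xs; have [_ r0 _ _] := Hs x xs; rewrite lee_fin.
rewrite -(ge0_integral_sum lebesgue_measure (measurable_itv _) mg g0).
apply: (@le_trans _ _ (\int[lebesgue_measure]_(u in `[d, T]) (cst K%:E) u)%E).
  apply: ge0_le_integral => //.
  - by move=> u Du; apply: sume_ge0 => x _; exact: g0.
  - by apply: emeasurable_sum => x; exact: mg.
  - move=> u _; rewrite (eq_big_seq (fun x => (rate S x u)%:E)); last first.
      by move=> x xs; rewrite /g xs.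
    by rewrite sumEFin lee_fin.
have Hm : lebesgue_measure (`[d, T] : set R) = (T - d)%:E.
  rewrite lebesgue_measure_itv /=; case: ltP => h; first by rewrite EFinB.
  have -> : T = d by apply/eqP; rewrite eq_le dT -lee_fin h.
  by rewrite subrr.
rewrite integral_cst // [X in (_ * X)%E](_ : _ = (T - d)%:E); last exact: Hm.
by rewrite -EFinM.
Qed.

Lemma lam_itv (R : realType) (a b : R) : a <= b ->
  lebesgue_measure (`[a, b] : set R) = (b - a)%:E.
Proof.
move=> ab; rewrite lebesgue_measure_itv /=; case: ltP => h; first by rewrite EFinB.
have -> : b = a by apply/eqP; rewrite eq_le ab -lee_fin h.
by rewrite subrr.
Qed.

Lemma int_cst_itv (R : realType) (a b k : R) : a <= b ->
  (\int[lebesgue_measure]_(u in `[a, b]) (k%:E) = (k * (b - a))%:E)%E.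
Proof.
move=> ab; have := @integral_cst _ _ _ lebesgue_measure _ (measurable_itv `[a, b]%R) k%:E.
rewrite /= => ->.
have := @lam_itv _ _ _ ab; rewrite /= => ->.
by rewrite EFinM.
Qed.

Definition bwork (R : realType) (P : task R -> bool) (x : task R) :=
  if P x then pwork x else sigma x.
Definition bcomp (R : realType) (P : task R -> bool) (r : task R -> R) x :=
  arr x + bwork P x / r x.
Definition box (R : realType) (P : task R -> bool) (r : task R -> R) :=
  Schedule P (fun x u => r x * (\1_(`[arr x, bcomp P r x]) u : R))
    (bcomp P r).

Lemma box_feasible (R : realType) (p : nat) (s : seq (task R)) P r :
  (forall x, x \in s -> valid_task p x) ->
  (forall x, x \in s -> 0 < r x) -> (forall x, x \in s -> ~~ P x -> r x <= 1) ->
  \sum_(x <- s) r x <= p%:R -> feasible p s (box P r).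
Proof.
move=> Hv Hr H1 Hsum; split.
  move=> u; apply: le_trans Hsum; rewrite big_seq [leRHS]big_seq.
  apply: ler_sum => x xs /=; rewrite indicE.
  have r0 := Hr x xs; case: (_ \in _); first by rewrite mulr1.
  by rewrite mulr0 ltW.
move=> x xs; have r0 := Hr x xs.
have [a0 [s0 /andP[pw1 _]]] := Hv x xs.
have w0 : 0 < bwork P x.
  rewrite /bwork; case: (P x) => //.
  by rewrite (ler_pdivlMr _ _ s0) mul1r in pw1; exact: lt_le_trans pw1.
have ac : arr x <= bcomp P r x by rewrite /bcomp lerDl divr_ge0 // ltW.
have wE : work (box P r) x = bwork P x by [].
split; first split.
- apply: measurable_funM; first exact: measurable_cst.
  exact: measurable_indic.
- by move=> u /=; rewrite indicE mulr_ge0 // ltW.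
- move=> u /= /negPf Pn; rewrite indicE.
  by case: (_ \in _); rewrite ?mulr1 ?mulr0 // H1 // Pn.
- move=> u /= h; rewrite indicE; case: (boolP (u \in _)); last by rewrite mulr0.
  rewrite inE /= in_itv /= => /andP[h1 h2].
  by case: h => h; [move: h1|move: h2]; rewrite leNgt h.
split => //.
- rewrite /done_by wE.
  rewrite (@eq_integral _ _ _ _ _ (fun _ => (r x)%:E)); last first.
    move=> u; rewrite inE /= => uI; rewrite indicE.
    by rewrite (_ : (u \in _) = true) ?mulr1 //; apply/mem_set.
  rewrite int_cst_itv //=; congr (_%:E).
  by rewrite /bcomp addrAC subrr add0r mulrC divfK // gt_eqF.
move=> v /= vc; rewrite /done_by wE.
have [va|av] := ltP v (arr x).
  rewrite set_itv_ge ?integral_set0 ?lte_fin //.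
  by rewrite bnd_simp -ltNge.
apply: (@le_lt_trans _ _ (\int[lebesgue_measure]_(u in `[arr x, v]) (r x)%:E)%E).
  apply: ge0_le_integral => //.
  - by move=> u _; rewrite /= lee_fin indicE mulr_ge0 // ltW.
  - apply/measurable_EFinP; apply: measurable_funM; first exact: measurable_cst.
    exact: measurable_indic.
  - by move=> u _; rewrite /= lee_fin indicE; case: (_ \in _); rewrite ?mulr1 ?mulr0 // ltW.
rewrite int_cst_itv // lte_fin.
rewrite -(ltr_pdivlMl _ _ r0) mulrC ltrBlDl.
by move: vc; rewrite /bcomp.
Qed.

Lemma union_meas (R : realType) (s : seq (task R)) (S : schedule R) :
  measurable (\big[setU/set0]_(x <- s) `[arr x, Defs.comp S x]%classic).
Proof. by apply: bigsetU_measurable => x _; exact: measurable_itv. Qed.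

Lemma awake_ge (R : realType) (s : seq (task R)) (S : schedule R) (T : R) :
  0 <= T ->
  (`[0, T] `<=` \big[setU/set0]_(x <- s) `[arr x, Defs.comp S x]%classic) ->
  (T%:E <= awake s S)%E.
Proof.
move=> T0 sub; rewrite /awake.
have := @lam_itv R 0 T T0; rewrite subr0 => <-.
apply: le_measure => //; rewrite inE; first exact: measurable_itv.
exact: union_meas.
Qed.

Lemma awake_le (R : realType) (s : seq (task R)) (S : schedule R) (B : R) :
  0 <= B -> (forall x, x \in s -> 0 <= arr x /\ Defs.comp S x <= B) ->
  (awake s S <= B%:E)%E.
Proof.
move=> B0 H; rewrite /awake.
have := @lam_itv R 0 B B0; rewrite subr0 => <-.
apply: le_measure => //; rewrite ?inE; first exact: union_meas.
  exact: measurable_itv.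
move=> u; rewrite big_seq; elim/big_rec: _ => // x U xs IH [].
  rewrite /= !in_itv /= => /andP[h1 h2]; have [a0 cB] := H x xs.
  by rewrite (le_trans a0 h1) (le_trans h2 cB).
exact: IH.
Qed.

Lemma work_le' (R : realType) (s : seq (task R)) (S : schedule R) (K d T : R) :
  (forall x, x \in s -> [/\ measurable_fun setT (rate S x),
        (forall u, 0 <= rate S x u),
        (forall u, u < arr x \/ Defs.comp S x < u -> rate S x u = 0) &
        done_by S x (Defs.comp S x) = (work S x)%:E]) ->
  (forall x, x \in s -> forall u, u < d \/ T < u -> rate S x u = 0) ->
  (forall u, \sum_(x <- s) rate S x u <= K) ->
  \sum_(x <- s) work S x <= K * Num.max (T - d) 0.
Proof.
move=> Hs HdT HK; have [dT|Td] := leP d T.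
  rewrite max_l ?subr_ge0 //; exact: work_le.
have -> : Num.max (T - d) 0 = d - d by rewrite subrr max_r // subr_le0 ltW.
apply: work_le => //.
move=> x xs u [h|h]; apply: HdT => //; [left|right] => //.
exact: lt_trans Td h.
Qed.

Lemma mem_union (R : realType) (s : seq (task R)) (S : schedule R) x u :
  x \in s -> arr x <= u <= Defs.comp S x ->
  (\big[setU/set0]_(y <- s) `[arr y, Defs.comp S y]%classic) u.
Proof.
elim: s => // z s IH; rewrite in_cons big_cons => /orP[/eqP -> h|xs h].
  by left; rewrite /= in_itv /=.
by right; apply: IH.
Qed.

Lemma bigmax_ex (R : realType) (s : seq (task R)) (f : task R -> R) u :
  0 < u -> u <= \big[Num.max/0]_(x <- s) f x -> exists2 x, x \in s & u <= f x.
Proof.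
move=> u0; elim: s => [|z s IH]; first by rewrite big_nil => h; move: (lt_le_trans u0 h); rewrite ltxx.
rewrite big_cons le_max => /orP[h|h]; first by exists z; rewrite ?mem_head.
by have [x xs ux] := IH h; exists x; rewrite ?in_cons ?xs ?orbT.
Qed.

Lemma le_bigmax' (R : realType) (s : seq (task R)) (f : task R -> R) x :
  x \in s -> f x <= \big[Num.max/0]_(y <- s) f y.
Proof.
elim: s => // z s IH; rewrite in_cons big_cons le_max => /orP[/eqP ->|xs].
  by rewrite lexx.
by rewrite IH ?orbT.
Qed.

Lemma opt_le (R : realType) (p : nat) (s : seq (task R)) (S : schedule R) :
  feasible p s S -> (opt_awake p s <= awake s S)%E.
Proof. by move=> fS; apply: ereal_inf_lbound; exists S. Qed.

Lemma feas_Hs (R : realType) (p : nat) (s : seq (task R)) (S : schedule R) :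
  feasible p s S -> forall x, x \in s -> [/\ measurable_fun setT (rate S x),
        (forall u, 0 <= rate S x u),
        (forall u, u < arr x \/ Defs.comp S x < u -> rate S x u = 0) &
        done_by S x (Defs.comp S x) = (work S x)%:E].
Proof. by move=> [_ H] x xs; have [[? ? _ ?] [_ ? _]] := H x xs; split. Qed.

Lemma feas_comp (R : realType) (p : nat) (s : seq (task R)) (S : schedule R) x :
  feasible p s S -> x \in s -> arr x <= Defs.comp S x.
Proof. by move=> [_ H] xs; have [_ [? _ _]] := H x xs. Qed.

Lemma feas_ser (R : realType) (p : nat) (s : seq (task R)) (S : schedule R) x u :
  feasible p s S -> x \in s -> ~~ par S x -> rate S x u <= 1.
Proof. by move=> [_ H] xs; have [[_ _ h _] _] := H x xs; exact: h. Qed.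

Lemma feas_zero (R : realType) (p : nat) (s : seq (task R)) (S : schedule R) x u :
  feasible p s S -> x \in s -> u < arr x \/ Defs.comp S x < u -> rate S x u = 0.
Proof. by move=> [_ H] xs; have [[_ _ _ h] _] := H x xs; exact: h. Qed.

Lemma feas_nn (R : realType) (p : nat) (s : seq (task R)) (S : schedule R) x u :
  feasible p s S -> x \in s -> 0 <= rate S x u.
Proof. by move=> [_ H] xs; have [[_ h _ _] _] := H x xs; exact: h. Qed.

Lemma aw_single (R : realType) (s : seq (task R)) (S : schedule R) x :
  x \in s -> arr x = 0 -> 0 <= Defs.comp S x -> ((Defs.comp S x)%:E <= awake s S)%E.
Proof.
move=> xs a0 c0; apply: awake_ge => // u; rewrite /= in_itv /= => h.
by apply: (mem_union xs); rewrite a0.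
Qed.

Lemma le_sum_mem (R : realType) (s : seq (task R)) (f : task R -> R) x :
  (forall y, y \in s -> 0 <= f y) -> x \in s -> f x <= \sum_(y <- s) f y.
Proof.
elim: s => // z s IH H; rewrite in_cons big_cons => /orP[/eqP ->|xs].
  rewrite lerDl big_seq sumr_ge0 // => y ys; apply: H.
  by rewrite in_cons ys orbT.
rewrite -[f x]add0r lerD //; first by apply: H; rewrite mem_head.
by apply: IH => // y ys; apply: H; rewrite in_cons ys orbT.
Qed.

Lemma sum_one (R : realType) (s : seq (task R)) : \sum_(x <- s) (1 : R) = (size s)%:R.
Proof.
elim: s => [|z s IH]; first by rewrite big_nil.
by rewrite big_cons IH /= -add1n natrD.
Qed.

Local Close Scope classical_set_scope.
Local Open Scope ring_scope.

Theorem proposition8p1 (R : realType) (p : nat) (hp : (1 <= p)%N)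
    (A : seq (task R) -> schedule R) :
  online_scheduler p A ->
  exists s : seq (task R),
    [/\ valid_instance p s, s != [::] &
        (((golden R - p%:R^-1)%:E * opt_awake p s) <= awake s (A s))%E].
Proof.
move=> HA; have [Afeas Hon] := HA.
set q : R := p%:R.
have q1 : 1 <= q by rewrite /q ler1n.
set g := golden R.
set s5 : R := Num.sqrt 5.
have s55 : s5 * s5 = 5 by rewrite -expr2 /s5 sqr_sqrtr // ler0n.
have s50 : 0 <= s5 := sqrtr_ge0 _.
have s5b : 2 <= s5 <= 3 by apply/andP; split; nra.
have gE : g = (1 + s5) / 2 by [].
have g2 : g * g = g + 1.
  apply/eqP; rewrite -subr_eq0; apply/eqP.
  have -> : g * g - (g + 1) = (s5 * s5 - 5) / 4 by rewrite gE; field.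
  by rewrite s55 subrr mul0r.
have gb : 3/2 <= g <= 2 by rewrite gE; apply/andP; split; lra.
case: (ltnP 1 p) => hp2; last first.
  have p1 : p = 1%N by apply/eqP; rewrite eqn_leq hp2 hp.
  pose x0 : task R := (1, 1, 0, 0%N).
  have V : valid_instance p [:: x0].
    split => // x; rewrite inE => /eqP ->.
    rewrite /valid_task /arr /sigma /pwork /= divr1; split => //; split; [exact: ltr01 | by rewrite lexx q1].
  exists [:: x0]; split => //.
  have c0 : 0 <= g - p%:R^-1 by rewrite p1 invr1; lra.
  have c1 : g - p%:R^-1 <= 1 by rewrite p1 invr1; lra.
  apply: le_trans (lee_wpmul2l _ (opt_le (Afeas _ V))) _; first by rewrite lee_fin.
  by apply: gee_pMl => //; exact: measure_ge0.
have q2 : 2 <= q by rewrite /q ler_nat.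
have q0 : 0 < q by lra.
set w := q^-1.
have qw : q * w = 1 by rewrite /w divff // gt_eqF.
have w0 : 0 < w by rewrite /w invr_gt0.
have wh : w <= 1/2 by nra.
set c := g - w.
have c1 : 1 <= c by rewrite /c; lra.
have c2 : c < 2 by rewrite /c; lra.
set a := c^-1.
have ca : c * a = 1 by rewrite /a divff // gt_eqF //; lra.
have a0 : 0 < a by rewrite /a invr_gt0; lra.
have a1 : a <= 1 by nra.
have qa1 : 1 <= q * a by nra.
have qaq : q * a <= q by nra.
set del := a + 1 - w - c.
have cdel : c * del = w * (g - 1).
  have -> : c * del = c * a - (g - w) * (g - 1) by rewrite /del /c; ring.
  rewrite ca; have -> : (g - w) * (g - 1) = g * g - g - w * (g - 1) by ring.
  rewrite g2; ring.
have del0 : 0 < del by nra.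
have dela : del < a by rewrite /del /c; lra.
pose x1 : task R := (1, q * a, 0, 0%N).
have ax1 : arr x1 = 0 by [].
have V1 : valid_instance p [:: x1].
  split => // x; rewrite inE => /eqP ->.
  rewrite /valid_task /arr /sigma /pwork /= divr1; split => //; split; [exact: ltr01 | by rewrite qa1 qaq].
have F1 := Afeas _ V1.
have x1s : x1 \in [:: x1] by rewrite mem_head.
have opt1 : (opt_awake p [:: x1] <= a%:E)%E.
  have Fb : feasible p [:: x1] (box (fun _ => true) (fun _ => q)).
    apply: box_feasible => //.
    - by move=> x xs; case: V1 => _; apply.
    - by rewrite big_seq1.
  apply: le_trans (opt_le Fb) _; apply: awake_le; first exact: ltW.
  move=> x; rewrite inE => /eqP ->; split => //.
  by rewrite /= /bcomp /bwork /= ax1 add0r mulrC mulKf // gt_eqF.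
have key1 : ((1%:E <= awake [:: x1] (A [:: x1]))%E) ->
    exists s : seq (task R),
    [/\ valid_instance p s, s != [::] &
        ((c%:E * opt_awake p s) <= awake s (A s))%E].
  move=> h1; exists [:: x1]; split => //.
  apply: le_trans h1; apply: le_trans (lee_wpmul2l _ opt1) _; first by rewrite lee_fin; lra.
  by rewrite -EFinM ca.
case Hpar : (par (A [:: x1]) x1).
  have hK1 : forall u, \sum_(x <- [:: x1]) rate (A [:: x1]) x u <= q.
    by case: F1.
  have wx1 : work (A [:: x1]) x1 = q * a by rewrite /work Hpar.
  set C1 := Defs.comp (A [:: x1]) x1.
  have c0 : 0 <= C1 by have := feas_comp F1 x1s; rewrite ax1.
  pose Z := [set v : R | forall u, u < v -> rate (A [:: x1]) x1 u = 0]%classic.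
  have Z0 : Z 0 by move=> u u0; apply: (feas_zero F1 x1s); left; rewrite ax1.
  have Zub : forall v, Z v -> v <= C1.
    move=> v Zv; rewrite leNgt; apply/negP => Cv.
    have hz : forall x, x \in [:: x1] -> forall u, u < C1 \/ C1 < u -> rate (A [:: x1]) x u = 0.
      move=> x; rewrite inE => /eqP -> u [h|h].
        by apply: Zv; exact: lt_trans h Cv.
      by apply: (feas_zero F1 x1s); right.
    have := work_le' (feas_Hs F1) hz hK1.
    rewrite big_seq1 wx1 subrr maxxx mulr0 => h; lra.
  have hsZ : has_sup Z by split; [exists 0 | exists C1 => v Zv; exact: Zub].
  set d := sup Z.
  have d0 : 0 <= d := sup_upper_bound hsZ Z0.
  have dC : d <= C1 := ge_sup (ex_intro _ 0 Z0) Zub.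
  have zd : forall u, u < d -> rate (A [:: x1]) x1 u = 0.
    move=> u ud; have ud' : 0 < d - u by rewrite subr_gt0.
    have [v Zv hv] := sup_adherent ud' hsZ.
    by apply: Zv; rewrite -/d in hv; lra.
  have pos : forall t, d < t -> exists u, u < t /\ 0 < rate (A [:: x1]) x1 u.
    move=> t dt; apply: contrapT => hn.
    have Zt : Z t.
      move=> u ut; apply/eqP; rewrite eq_le (feas_nn u F1 x1s) andbT leNgt.
      by apply/negP => h; apply: hn; exists u; split.
    have := sup_upper_bound hsZ Zt; rewrite -/d; lra.
  have [dge|dlt] := leP (1 - a) d.
    apply: key1.
    have hz : forall x, x \in [:: x1] -> forall u, u < d \/ C1 < u -> rate (A [:: x1]) x u = 0.
      move=> x; rewrite inE => /eqP -> u [h|h]; first exact: zd.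
      by apply: (feas_zero F1 x1s); right.
    have := work_le' (feas_Hs F1) hz hK1.
    rewrite big_seq1 wx1 max_l ?subr_ge0 // => h.
    have h2 : a <= C1 - d by rewrite ler_pM2l in h.
    apply: le_trans (aw_single x1s ax1 c0); rewrite lee_fin -/C1; lra.
  set eta := Num.min del ((1 - d) / 2).
  have eta0 : 0 < eta by rewrite /eta lt_min del0 /=; lra.
  have etadel : eta <= del by rewrite /eta ge_min lexx.
  have etad : eta <= (1 - d) / 2 by rewrite /eta ge_min lexx orbT.
  set t2 := d + eta.
  set L := 1 - t2.
  have L0 : 0 < L by rewrite /L /t2; lra.
  pose f := fun i : nat => ((L, q * L, t2, i.+1) : task R).
  pose ys := [seq f i | i <- iota 0 p.-1].
  pose s2 := x1 :: ys.
  have ays : forall y, y \in ys -> [/\ arr y = t2, sigma y = L & pwork y = q * L].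
    by move=> y /mapP [i _ ->].
  have x1ys : x1 \notin ys.
    by apply/mapP => -[i _ /(congr1 snd)].
  have V2 : valid_instance p s2.
    split.
      rewrite /s2 cons_uniq x1ys /= map_inj_uniq ?iota_uniq //.
      by move=> i j /(congr1 snd) [].
    move=> x; rewrite inE => /orP[/eqP -> | xy]; first by case: V1 => _; apply.
    have [ay sy py] := ays x xy; rewrite /valid_task ay sy py mulfK ?gt_eqF //.
    by split; [rewrite /t2; lra | split; [done | rewrite q1 lexx]].
  have F2 := Afeas _ V2.
  have x1s2 : x1 \in s2 by rewrite mem_head.
  have arrE : forall t, t < t2 -> arrived s2 t = arrived [:: x1] t.
    move=> t tt; rewrite /arrived /s2 /=.
    have -> : [seq x <- ys | arr x <= t] = [::].
      rewrite (@eq_in_filter _ _ pred0) ?filter_pred0 // => y yy.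
      by have [ay _ _] := ays y yy; rewrite ay /=; apply/negbTE; rewrite -ltNge.
    by case: ifP.
  have eqA : forall t, t < t2 -> arrived [:: x1] t =i arrived s2 t.
    by move=> t tt z; rewrite arrE.
  have x1arr : forall t, 0 <= t -> x1 \in arrived [:: x1] t.
    by move=> t t0; rewrite /arrived /= ax1 t0 mem_head.
  have rateE : forall u, u < t2 -> rate (A s2) x1 u = rate (A [:: x1]) x1 u.
    move=> u ut; have [u0|u0] := ltP u 0.
      by rewrite (feas_zero F2 x1s2) ?(feas_zero F1 x1s) // ax1; left.
    have [h _] := Hon [:: x1] s2 u V1 V2 (eqA u ut) x1 (x1arr u u0).
    by rewrite h.
  have par2 : par (A s2) x1 = true.
    have dt2 : d < t2 by rewrite /t2; lra.
    have [u0 [u0t r0]] := pos t2 dt2.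
    have u00 : 0 <= u0.
      rewrite leNgt; apply/negP => h.
      by move: r0; rewrite (feas_zero F1 x1s) ?ltxx // ax1; left.
    have [_ h] := Hon [:: x1] s2 u0 V1 V2 (eqA u0 u0t) x1 (x1arr u0 u00).
    by rewrite -h ?Hpar //; exists u0; split.
  have dt2 : d < t2 by rewrite /t2; lra.
  have p1 : p = p.-1.+1 by rewrite prednK.
  have y0s : f 0%N \in ys.
    by rewrite /ys map_f // mem_iota /= add0n -ltnS -p1.
  have y0s2 : f 0%N \in s2 by rewrite in_cons y0s orbT.
  set T := \big[Num.max/0]_(x <- s2) Defs.comp (A s2) x.
  have cT : forall x, x \in s2 -> Defs.comp (A s2) x <= T.
    by move=> x xs; apply: le_bigmax'.
  have tT : t2 <= T by apply: le_trans (feas_comp F2 y0s2) (cT _ y0s2).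
  have hz2 : forall x, x \in s2 -> forall u, u < d \/ T < u -> rate (A s2) x u = 0.
    move=> x xs u [h|h]; last by apply: (feas_zero F2 xs); right; exact: le_lt_trans (cT _ xs) h.
    move: xs; rewrite in_cons => /orP[/eqP ->|xy].
      by rewrite rateE ?zd //; lra.
    by apply: (feas_zero F2 (_ : x \in s2)); [rewrite in_cons xy orbT | left; have [-> _ _] := ays x xy; lra].
  have hK2 : forall u, \sum_(x <- s2) rate (A s2) x u <= q by case: F2.
  have W := work_le' (feas_Hs F2) hz2 hK2.
  rewrite max_l ?subr_ge0 in W; last by lra.
  rewrite big_cons in W.
  have Wy : (q - 1) * L <= \sum_(y <- ys) work (A s2) y.
    have -> : (q - 1) * L = \sum_(y <- ys) L.
      rewrite /ys big_map -(subn0 p.-1) -/(index_iota 0 p.-1) sumr_const_nat subn0.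
      by rewrite -mulr_natl {1}/q {1}p1 -natr1 addrK.
    rewrite big_seq [leRHS]big_seq; apply: ler_sum => y yy.
    have [_ sy py] := ays y yy; rewrite /work; case: (par _ y); rewrite ?sy ?py //.
    by rewrite ler_pMl //.
  have Ldef : L = 1 - d - eta by rewrite /L /t2; lra.
  have deldef : del = a + 1 - w - c by [].
  have wx2 : work (A s2) x1 = q * a by rewrite /work par2.
  have W' : q * a + (q - 1) * L <= q * (T - d) by rewrite wx2 in W; lra.
  have qTc : q * c <= q * T.
    rewrite Ldef in W'.
    have e0 : q * del = q * a + q - q * w - q * c by rewrite deldef; ring.
    have e1 : q * c = q * a + q - 1 - q * del by rewrite qw in e0; lra.
    have e2 : 0 <= q * (del - eta) by apply: mulr_ge0; lra.
    nra.
  have cT' : c <= T by rewrite ler_pM2l in qTc.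
  set C2 := Defs.comp (A s2) x1.
  have C2t : t2 <= C2.
    have hz1 : forall x, x \in [:: x1] -> forall u, u < d \/ C2 < u -> rate (A s2) x u = 0.
      move=> x; rewrite inE => /eqP -> u [h|h].
        by rewrite rateE ?zd //; lra.
      by apply: (feas_zero F2 x1s2); right.
    have hK1' : forall u, \sum_(x <- [:: x1]) rate (A s2) x u <= q.
      move=> u; rewrite big_seq1; apply: le_trans (hK2 u).
      by apply: (@le_sum_mem _ _ (fun y => rate (A s2) y u)) => // y yin; exact: feas_nn u F2 yin.
    have Hs1 : forall x, x \in [:: x1] -> [/\ measurable_fun setT (rate (A s2) x),
        (forall u, 0 <= rate (A s2) x u),
        (forall u, u < arr x \/ Defs.comp (A s2) x < u -> rate (A s2) x u = 0) &
        done_by (A s2) x (Defs.comp (A s2) x) = (work (A s2) x)%:E].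
      by move=> x; rewrite inE => /eqP ->; exact: (feas_Hs F2 x1s2).
    have := work_le' Hs1 hz1 hK1'.
    rewrite big_seq1 wx2 ler_pM2l // le_max => /orP[h|h]; last by lra.
    rewrite /t2; lra.
  have T0 : 0 <= T by lra.
  have awT : (T%:E <= awake s2 (A s2))%E.
    apply: awake_ge => // u; rewrite /= in_itv /= => /andP[u0 uT].
    have [uc|cu] := leP u C2.
      by apply: (mem_union x1s2); rewrite ax1 u0 uc.
    have upos : 0 < u by lra.
    have [x xs ux] := bigmax_ex upos uT.
    apply: (mem_union xs); rewrite ux andbT.
    move: xs ux; rewrite in_cons => /orP[/eqP -> | xy] ux; first by rewrite -/C2 in ux; lra.
    by have [-> _ _] := ays x xy; lra.
  have opt2 : (opt_awake p s2 <= 1%:E)%E.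
    have Fb : feasible p s2 (box (fun _ => false) (fun _ => 1)).
      apply: box_feasible => //.
      - by move=> x xs; case: V2 => _; apply.
      - by rewrite sum_one /s2 /= size_map size_iota -p1.
    apply: le_trans (opt_le Fb) _; apply: awake_le => //.
    move=> x; rewrite in_cons => /orP[/eqP -> | xy].
      by rewrite /= /bcomp /bwork /= ax1 add0r divr1.
    have [ay sy _] := ays x xy.
    by rewrite /= /bcomp /bwork /= ay sy divr1 /L; split; lra.
  exists s2; split => //.
  apply: le_trans awT; apply: le_trans (lee_wpmul2l _ opt2) _; first by rewrite lee_fin; lra.
  by rewrite -EFinM mulr1 lee_fin.
apply: key1.
have hz : forall x, x \in [:: x1] -> forall u, u < 0 \/ Defs.comp (A [:: x1]) x1 < u -> rate (A [:: x1]) x u = 0.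
  move=> x; rewrite inE => /eqP -> u h; apply: (feas_zero F1 x1s); by rewrite ax1.
have hK : forall u, \sum_(x <- [:: x1]) rate (A [:: x1]) x u <= 1.
  by move=> u; rewrite big_seq1; apply: (feas_ser u F1 x1s); rewrite Hpar.
have := work_le' (feas_Hs F1) hz hK.
rewrite big_seq1 /work Hpar /sigma /= subr0 mul1r.
have c0 := feas_comp F1 x1s; rewrite ax1 in c0.
rewrite max_l // => h.
apply: le_trans (aw_single x1s ax1 c0); by rewrite lee_fin.
Qed.
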